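(* Let $A$ be a set and let $\alpha,\beta$ be quasiorders on $A$. The following are equivalent: (1) $\alpha\cap\beta=\Delta_A$ and $\alpha\cup\beta=A\times A$; (2) $\alpha\cap\beta=\Delta_A$ and $(\alpha\cap\gamma)\vee(\beta\cap\gamma)=\gamma$ for every quasiorder $\gamma$ on $A$.
   Context: A quasiorder on a set $A$ is a reflexive and transitive binary relation on $A$; $\Delta_A=\{(a,a)\mid a\in A\}$. The set $\mathrm{Quord}(A)$ of all quasiorders on $A$ is a complete lattice under inclusion; $\cap$ is intersection and $\gamma_1\vee\gamma_2$ denotes the join in this lattice, i.e. the smallest quasiorder containing $\gamma_1\cup\gamma_2$ (the transitive closure of $\gamma_1\cup\gamma_2$). *)

(* Defs.v *)
From Stdlib Require Import Relations.

Definition quasiorder {A : Type} (r : relation A) : Prop :=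
  reflexive A r /\ transitive A r.

Definition rel_eq {A : Type} (r s : relation A) : Prop :=
  forall x y, r x y <-> s x y.

Definition rel_cap {A : Type} (r s : relation A) : relation A :=
  fun x y => r x y /\ s x y.

Definition rel_cup {A : Type} (r s : relation A) : relation A :=
  fun x y => r x y \/ s x y.

Definition diag (A : Type) : relation A := fun x y => x = y.

Definition full (A : Type) : relation A := fun _ _ => True.

Definition qjoin {A : Type} (r s : relation A) : relation A :=
  clos_trans A (rel_cup r s).

(* Main.v *)
Require Import Defs.
From Stdlib Require Import Relations.

Theorem proposition2p1 (A : Type) (alpha beta : relation A)
  (Ha : quasiorder alpha) (Hb : quasiorder beta) :
  (rel_eq (rel_cap alpha beta) (diag A) /\ rel_eq (rel_cup alpha beta) (full A))
  <->
  (rel_eq (rel_cap alpha beta) (diag A) /\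
   forall gamma : relation A, quasiorder gamma ->
     rel_eq (qjoin (rel_cap alpha gamma) (rel_cap beta gamma)) gamma).
Proof.
  destruct Ha as [Ra Ta]. destruct Hb as [Rb Tb].
  split.
  - intros [H1 H2]. split; [exact H1|].
    intros gamma [Rg Tg] x y. split.
    + intro H. induction H as [u v [[_ h]|[_ h]]|u v w _ IH1 _ IH2].
      * exact h.
      * exact h.
      * exact (Tg _ _ _ IH1 IH2).
    + intro h. apply t_step.
      destruct (proj2 (H2 x y) I) as [h'|h'].
      * left. split; assumption.
      * right. split; assumption.
  - intros [H1 H2]. split; [exact H1|].
    intros x y. split; [intros; exact I|]. intros _.
    set (g := fun u v : A => u = v \/ (u = x /\ v = y)).
    assert (Qg : quasiorder g).
    { split.
      - intro u. left. reflexivity.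
      - intros u v w [e1|[e1 e2]] [e3|[e3 e4]]; unfold g.
        + left; congruence.
        + subst. right; auto.
        + subst. right; auto.
        + subst. right; auto. }
    assert (Hg : g x y) by (right; auto).
    apply (proj2 (H2 g Qg x y)) in Hg.
    assert (P : forall u v, clos_trans A (rel_cup (rel_cap alpha g) (rel_cap beta g)) u v ->
      u = v \/ (u = x /\ v = y /\ rel_cup alpha beta x y)).
    { intros u v H. induction H as [u v [[ha [e|[e1 e2]]]|[hb [e|[e1 e2]]]]|u v w _ IH1 _ IH2].
      - left; exact e.
      - subst. right. split; [reflexivity|split;[reflexivity|left; exact ha]].
      - left; exact e.
      - subst. right. split; [reflexivity|split;[reflexivity|right; exact hb]].
      - destruct IH1 as [e|[e1 [e2 h]]]; [subst; exact IH2|].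
        destruct IH2 as [e|[e3 [e4 h']]]; [subst; right; auto|].
        subst. right; auto. }
    destruct (P _ _ Hg) as [e|[_ [_ h]]].
    + subst. left. apply Ra.
    + exact h.
Qed.
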